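(* Let $\ell,m$ be positive integers and let $S(\ell,m)$ be the $(\ell+m)\times(\ell+m)$ coloring matrix whose first $\ell$ rows consist entirely of ones and whose remaining $m$ rows consist entirely of zeroes. Then for all $n>1$, $$t_{S(\ell,m)}(n)=\sum_{k=1}^{n-1}N_{n-1,k}\,\ell^{n-k}(\ell+m)^k=\sum_{k=1}^{n-1}\frac{1}{n-1}\binom{n-1}{k}\binom{n-1}{k-1}\ell^{n-k}(\ell+m)^k.$$
   Context: A plane tree is an unlabeled rooted tree in which the children of every vertex are linearly ordered. A coloring matrix is a square matrix $A=(a_{ij})$ with entries in $\{0,1\}$. An $A$-coloring of a plane tree assigns to each vertex a color (an index of a row of $A$) such that whenever a vertex of color $j$ is a child of a vertex of color $i$, $a_{ij}=1$. Let $t_A(n)$ be the number of pairs (plane tree with $n$ vertices, $A$-coloring of it). $N_{n,k}=\frac1n\binom{n}{k}\binom{n}{k-1}$ denotes the Narayana numbers. *)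

(* Defs.v *)
From HB Require Import structures.
From mathcomp Require Import all_boot all_order all_algebra.
From Stdlib Require Import List.
Set Implicit Arguments. Unset Strict Implicit. Unset Printing Implicit Defensive.

Inductive ctree (k : nat) : Type :=
  CNode : 'I_k -> list (ctree k) -> ctree k.

Definition color (k : nat) (t : ctree k) : 'I_k :=
  let: CNode c _ := t in c.

Fixpoint csize (k : nat) (t : ctree k) : nat :=
  let: CNode _ ts := t in (sumn (map (@csize k) ts)).+1.

Fixpoint valid (k : nat) (A : 'M[bool]_k) (t : ctree k) : bool :=
  let: CNode c ts := t in
  all (fun s => A c (color s) && valid A s) ts.

Definition tA_is (k : nat) (A : 'M[bool]_k) (n c : nat) : Prop :=
  exists L : list (ctree k),
    NoDup L /\ (forall x, In x L <-> (valid A x /\ csize x = n)) /\ length L = c.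

Definition Smat (l m : nat) : 'M[bool]_(l + m) :=
  \matrix_(i, j) (i < l)%N.

Definition narayana (n k : nat) : rat :=
  (n%:R)^-1 * ('C(n, k) * 'C(n, k.-1))%:R.

(* Main.v *)
Require Import Defs.
From HB Require Import structures.
From mathcomp Require Import all_boot all_order all_algebra.
From mathcomp Require Import ring lra zify.
Import GRing.Theory Num.Theory.
Local Open Scope ring_scope.

Ltac pos_nat := repeat match goal with |- context [(?k%:R : rat)] =>
  let x := fresh "x" in let hx := fresh "hx" in
  set x := (k%:R : rat); have hx : 0 <= x by exact: ler0n; clearbody x end.
Ltac nzs := repeat (apply/andP; split); pos_nat; apply/eqP; lra.

Definition gc (N r i : nat) : rat :=
  if r == 0%N then ((N == 0%N) && (i == 0%N))%:R
  else if (N < r)%N then 0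
  else if r == N then (i == 0%N)%:R
  else if i == 0%N then 0
  else r%:R / N%:R * ('C(N, i) * 'C(N - r - 1, i.-1))%:R.

Definition hc (N r i : nat) : rat :=
  if (N < r)%N then 0
  else ('C(N, i) * 'C(N - r, i))%:R - i%:R / N%:R * ('C(N, i) * 'C(N - r + 1, i.+1))%:R.

Lemma binR_diag (n j : nat) :
  ('C(n.+1, j.+1))%:R = (n.+1)%:R * ('C(n, j))%:R / (j.+1)%:R :> rat.
Proof.
have := mul_bin_diag n.+1 j => /(congr1 (fun x : nat => x%:R : rat)).
rewrite /= !natrM => ->; field; nzs.
Qed.

Lemma binR_left (n j : nat) :
  ('C(n, j.+1))%:R = (n - j)%:R * ('C(n, j))%:R / (j.+1)%:R :> rat.
Proof.
have := mul_bin_left n j => /(congr1 (fun x : nat => x%:R : rat)).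
rewrite /= !natrM => <-; field; nzs.
Qed.

Lemma key (r M j : nat) :
  let N := (r + M.+1)%N in
  (r.+1)%:R / (N.+1)%:R * ('C(N.+1, j.+1) * 'C(M, j))%:R =
  r%:R / N%:R * ('C(N, j.+1) * 'C(M, j))%:R +
  (('C(N, j) * 'C(M, j))%:R - j%:R / N%:R * ('C(N, j) * 'C(M.+1, j.+1))%:R) :> rat.
Proof.
move=> N.
rewrite !natrM binR_diag binR_left (binR_diag M j).
have [jN|Nj] := leqP j N; last first.
  by rewrite bin_small // !(mul0r, mulr0, subr0, addr0).
rewrite natrB // /N !natrD.
field; nzs.
Qed.

Lemma hc_rec (N r i : nat) : (0 < r)%N -> hc N r i = gc N r i + hc N r.+1 i.
Proof.
move=> r0; rewrite /hc /gc.
have [Nr|rN] := ltnP N r.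
  have -> : (N < r.+1)%N by lia.
  have -> : (r == 0%N) = false by lia.
  exact: (esym (addr0 _)).
have -> : (N < r.+1)%N = (r == N) by lia.
have -> : (r == 0%N) = false by lia.
case: eqP => [<-|/eqP rNe].
  rewrite subnn add0n; case: i => [|i].
    by rewrite !bin0 !mul0r subr0.
  by rewrite (@bin_small 0 i.+1) // (@bin_small 1 i.+2) // !muln0 mulr0 subr0 /=.
have [M eN] : exists M, N = (r + M.+1)%N by exists (N - r.+1)%N; lia.
have -> : (N - r - 1 = M)%N by lia.
have -> : (N - r = M.+1)%N by lia.
have -> : (N - r.+1 = M)%N by lia.
case: i => [|j].
  by rewrite !bin0 !mul0r !subr0 add0r.
have e : ('C(M, j.+1))%:R = ('C(M.+1, j.+1))%:R - ('C(M, j))%:R :> rat by rewrite binS natrD addrK.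
rewrite succnK !addn1 (binS M.+1 j.+1) !natrM (natrD _ ('C(M.+1, j.+2))) e (binR_diag M j) eN (natrD _ r M.+1).
have -> : (j.+1 == 0%N) = false by []. field; nzs.
Qed.

Lemma gc_rec (N r i : nat) :
  gc N.+1 r.+1 i = gc N r i + (if i is j.+1 then hc N r.+1 j else 0).
Proof.
rewrite /gc /hc /=.
have [Nr|rN] := ltnP N r.
  have -> : (N < r.+1)%N by lia.
  have -> : (r == 0%N) = false by lia.
  rewrite ltnS Nr.
  by case: i => *; ring.
case: (eqVneq r N) => [<-|rNe].
  rewrite ltnn eqxx ltnSn.
  by case: (r == 0%N); case: i => * /=; ring.
have [M eN] : exists M, N = (r + M.+1)%N by exists (N - r.+1)%N; lia.
have -> : (N.+1 < r.+1)%N = false by lia.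
have -> : (r.+1 == N.+1) = false by lia.
have -> : (N < r.+1)%N = false by lia.
have -> : (N.+1 - r.+1 - 1 = M)%N by lia.
have -> : (N - r.+1 + 1 = M.+1)%N by lia.
have -> : (N - r.+1 = M)%N by lia.
have -> : (N == 0%N) = false by lia.
case: i => [|j]; first by case: (r == 0%N); rewrite addr0.
rewrite /= eN.
case: (eqVneq r 0%N) => [->|r0].
  by move: (key 0 M j) => /= ->; ring.
exact: (key r M j).
Qed.

Lemma gc_big (N r i : nat) : (N < i)%N -> gc N r i = 0.
Proof.
move=> Ni; rewrite /gc.
have -> : (i == 0%N) = false by lia.
rewrite andbF; case: ifP => // _; case: ifP => // _; case: ifP => // _.
by rewrite bin_small // mul0n mulr0.
Qed.

Lemma hc_big (N r i : nat) : (N < r)%N -> hc N r i = 0.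
Proof. by rewrite /hc => ->. Qed.

Lemma tele (N r i K : nat) : (0 < r)%N ->
  \sum_(d < K) gc N (r + d) i = hc N r i - hc N (r + K) i.
Proof.
move=> r0; elim: K => [|K IH]; first by rewrite big_ord0 addn0 subrr.
rewrite big_ord_recr /= IH (hc_rec N (r + K) i); last by lia.
rewrite addnS; ring.
Qed.

Definition Gcf (a b : rat) (r N : nat) : rat :=
  \sum_(i < N.+1) gc N r i * (a ^+ i * b ^+ (N - i)).
Definition Hcf (a b : rat) (r N : nat) : rat :=
  \sum_(i < N.+1) hc N r i * (a ^+ i * b ^+ (N - i)).

Lemma sumG (a b : rat) (N r : nat) :
  \sum_(d < N) Gcf a b (r.+1 + d) N = Hcf a b r.+1 N.
Proof.
rewrite /Gcf exchange_big /Hcf; apply: eq_bigr => i _.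
rewrite -mulr_suml tele // (@hc_big N (r.+1 + N) i) ?subr0 //; lia.
Qed.

Fixpoint Gn (a b N r : nat) {struct N} : nat :=
  match N with
  | 0 => (r == 0)%N
  | N'.+1 => match r with
             | 0 => 0
             | r'.+1 => b * Gn a b N' r' + a * \sum_(d < N') Gn a b N' (r' + d.+1)
             end
  end.

Lemma Gn_cf (a b N r : nat) : (Gn a b N r)%:R = Gcf a%:R b%:R r N.
Proof.
elim: N r => [|N IH] r.
  rewrite /Gcf big_ord1 /gc /=; case: r => [|r] /=; ring.
case: r => [|r].
  rewrite /Gcf big1 // => i _; rewrite /gc /=; ring.
rewrite /= natrD !natrM natr_sum IH.
under eq_bigr => d _ do rewrite IH addnS -addSn.
rewrite sumG /Gcf /Hcf [RHS]big_ord_recl /= gc_rec subn0.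
rewrite [X in _ = _ + X](eq_bigr (fun i : 'I_N.+1 => gc N r i.+1 * (a%:R ^+ i.+1 * b%:R ^+ (N - i)) + hc N r.+1 i * (a%:R ^+ i.+1 * b%:R ^+ (N - i)))); last first.
  by move=> i _; rewrite gc_rec /bump /= add1n subSS mulrDl.
rewrite big_split /= [in RHS]big_ord_recr /= (@gc_big N r N.+1) // mul0r addr0.
rewrite addr0 big_ord_recl /= mulrDr !mulr_sumr subn0 -!addrA; congr (_ + (_ + _)).
- by rewrite expr0 !mul1r exprS; ring.
- apply: eq_bigr => i _; rewrite /bump /= add1n.
  have -> : (N - i = (N - i.+1).+1)%N by have := ltn_ord i; lia.
  rewrite !exprS; ring.
- apply: eq_bigr => i _; rewrite exprS; ring.
Qed.

Lemma Gcf_nara (a b : rat) (n : nat) : (1 < n)%N ->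
  Gcf a b 1 n = \sum_(1 <= k < n) narayana n.-1 k * (a ^+ (n - k) * b ^+ k).
Proof.
case: n => [|[|p]] // _.
rewrite /Gcf -(big_mkord xpredT (fun i => gc p.+2 1 i * (a ^+ i * b ^+ (p.+2 - i)))).
rewrite big_ltn // big_nat_recr //.
have -> : gc p.+2 1 0 = 0 by [].
have -> : gc p.+2 1 p.+2 = 0.
  by rewrite /gc /= (_ : (p.+2 - 1 - 1 = p)%N) ?(@bin_small p p.+1) ?muln0 ?mulr0 //; lia.
rewrite !mul0r add0r Monoid.mulm1 big_nat_rev.
apply: eq_big_nat => k /andP [k1 kp].
case: k k1 kp => [|q] // _ qp.
have -> : (1 + p.+2 - q.+2 = p.+1 - q)%N by lia.
have -> : (p.+2 - (p.+1 - q) = q.+1)%N by lia.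
have -> : (p.+2 - q.+1 = p.+1 - q)%N by lia.
congr (_ * _).
rewrite /gc /narayana /=.
case: eqP => [?|_]; first lia.
have -> : (p.+2 - 1 - 1 = p)%N by lia.
have -> : ((p.+1 - q).-1 = p - q)%N by lia.
have -> : (p.+1 - q = p.+2 - q.+1)%N by lia.
have e2 : 'C(p, p - q) = 'C(p, q) by rewrite bin_sub //; lia.
rewrite (@bin_sub p.+2 q.+1) ?e2; last lia.
rewrite !natrM binR_diag (binR_diag p q).
field; nzs.
Qed.

Local Close Scope ring_scope.
From Stdlib Require Import List.
Set Implicit Arguments. Unset Strict Implicit. Unset Printing Implicit Defensive.

Section Enc.
Variable K : nat.

Section Ind.
Variable P : ctree K -> Prop.
Hypothesis H : forall c ts, Forall P ts -> P (CNode c ts).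
Fixpoint ctree_ind2 (t : ctree K) : P t :=
  match t with
  | CNode c ts => @H c ts ((fix aux (ts : list (ctree K)) : Forall P ts :=
       match ts with
       | nil => Forall_nil P
       | cons t ts' => Forall_cons t (ctree_ind2 t) (aux ts')
       end) ts)
  end.
End Ind.

Fixpoint enc (t : ctree K) : GenTree.tree 'I_K :=
  let: CNode c ts := t in GenTree.Node 0 (GenTree.Leaf c :: map enc ts).

Lemma enc_inj : injective enc.
Proof.
move=> t1; elim/ctree_ind2: t1 => c ts IH [c' ts'] /= [-> e]; congr CNode.
elim: ts ts' IH e => [|t ts IHts] [|t' ts'] //= IH [e1 e2].
inversion IH as [|x y Ht Hts]; subst.
by rewrite (Ht _ e1) (IHts _ Hts e2).
Qed.
End Enc.

HB.instance Definition _ K := Equality.copy (ctree K) (inj_type (@enc_inj K)).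

Lemma In_mem (T : eqType) (x : T) (s : list T) : List.In x s <-> x \in s.
Proof.
elim: s => [|y s IH] /=; first by split.
split.
  by move=> [->|/IH h]; rewrite seq.in_cons ?eqxx // h orbT.
by rewrite seq.in_cons => /orP [/eqP ->|/IH]; [left|right].
Qed.

Lemma uniq_NoDup (T : eqType) (s : list T) : uniq s -> NoDup s.
Proof.
elim: s => [|x s IH] /=; first by constructor.
by case/andP => nx us; constructor; [move/In_mem; apply/negP|apply: IH].
Qed.

Lemma length_size (T : Type) (s : list T) : length s = size s.
Proof. by elim: s => //= x s ->. Qed.

Lemma size_flatten_map (S T : Type) (F : S -> list T) (s : list S) :
  size (flatten (seq.map F s)) = \sum_(x <- s) size (F x).
Proof. by elim: s => [|x s IH]; rewrite ?big_nil ?big_cons //= size_cat IH. Qed.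

Lemma uniq_flatten_map (S T : eqType) (F : S -> list T) (s : list S) :
  uniq s -> (forall x, x \in s -> uniq (F x)) ->
  (forall x y z, x \in s -> y \in s -> z \in F x -> z \in F y -> x = y) ->
  uniq (flatten (seq.map F s)).
Proof.
elim: s => [|x s IH] //= /andP [xs us] uF dis.
rewrite cat_uniq uF ?mem_head //= IH //; last first.
- by move=> y y' z ys y's; apply: dis; rewrite seq.in_cons ?ys ?y's orbT.
- by move=> y ys; apply: uF; rewrite seq.in_cons ys orbT.
rewrite andbT; apply/hasPn => z /flatten_mapP [y ys zy]; apply/negP => zx.
have exy : x = y by apply: (dis x y z); rewrite ?mem_head ?seq.in_cons ?ys ?orbT.
by move: xs; rewrite exy ys.
Qed.

Lemma lmapE (S T : Type) (f : S -> T) (s : list S) : List.map f s = seq.map f s.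
Proof. by elim: s => //= x s ->. Qed.

Lemma csizeE K (c : 'I_K) ts : csize (CNode c ts) = (sumn (seq.map (@csize K) ts)).+1.
Proof. by rewrite /= lmapE. Qed.

Lemma csize_gt0 K (t : ctree K) : (0 < csize t)%N.
Proof. by case: t. Qed.

Lemma size_le_sumn K (ts : list (ctree K)) : (size ts <= sumn (seq.map (@csize K) ts))%N.
Proof. elim: ts => //= t ts IH; have := csize_gt0 t; lia. Qed.

Section Main.
Variables l m : nat.
Local Notation K := (l + m).
Local Notation A := (Smat l m).

Lemma SmatE (i j : 'I_K) : A i j = (i < l)%N.
Proof. by rewrite /Smat mxE. Qed.

Definition build (c : 'I_K) (d : nat) (fs : list (ctree K)) : list (ctree K) :=
  CNode c (take d fs) :: drop d fs.

Definition ds (c : 'I_K) (N : nat) : list nat := if (c < l)%N then iota 0 N.+1 else [:: 0%N].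

Fixpoint genF (N r : nat) {struct N} : list (list (ctree K)) :=
  match N with
  | 0 => if r == 0%N then [:: [::]] else [::]
  | N'.+1 => match r with
    | 0 => [::]
    | r'.+1 => flatten [seq flatten [seq [seq build c d fs | fs <- genF N' (r' + d)]
                                    | d <- ds c N'] | c <- enum 'I_K]
    end
  end.

Definition okF (N r : nat) (fs : list (ctree K)) : bool :=
  [&& size fs == r, all (valid A) fs & sumn (seq.map (@csize K) fs) == N].

Lemma mem_genF N r fs : (fs \in genF N r) = okF N r fs.
Proof.
elim: N r fs => [|N IH] r fs.
  rewrite /okF /=; case: fs => [|t fs] /=.
    by case: r.
  have h := csize_gt0 t; have -> : (csize t + sumn [seq csize i | i <- fs] == 0%N) = false by lia.
  by rewrite !andbF; case: (r == 0%N).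
case: r => [|r].
  rewrite /okF seq.in_nil; case: fs => //= t fs; lia.
apply/idP/idP.
  case/flatten_mapP => c _ /flatten_mapP [d dd /mapP [gs]].
  rewrite IH => /and3P [/eqP sg vg /eqP eg] ->.
  have dle : (d <= size gs)%N by rewrite sg; lia.
  rewrite /okF /build /= size_drop sg.
  have -> : (r + d - d)%N = r by lia.
  rewrite eqxx /= lmapE.
  rewrite -(cat_take_drop d gs) all_cat map_cat sumn_cat in vg eg.
  case/andP: vg => vt vd; rewrite vd andbT.
  apply/andP; split; last by rewrite addSn eg.
  move: dd; rewrite /ds; case: ifP => cl.
    by move=> _; apply/allP => s st; rewrite SmatE cl (allP vt).
  by rewrite mem_seq1 => /eqP de; rewrite de take0.
case: fs => [|[c ts] rest] //.
rewrite /okF /= => /and3P [sr /andP [vt vr] se].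
apply/flatten_mapP; exists c; first by rewrite mem_enum.
apply/flatten_mapP; exists (size ts).
  rewrite /ds; case: ifP => cl.
    rewrite mem_iota /= add0n ltnS.
    move: se; rewrite lmapE; have := size_le_sumn ts; lia.
  case: ts vt {se} => //= t ts; rewrite SmatE cl //.
apply/mapP; exists (ts ++ rest).
  rewrite IH /okF size_cat all_cat map_cat sumn_cat.
  have -> : all (valid A) ts.
    by apply/allP => s /(allP vt) /andP [].
  rewrite vr /=; apply/andP; split; first by apply/eqP; move/eqP: sr; lia.
  by move: se; rewrite lmapE; lia.
by rewrite /build take_size_cat // drop_size_cat.
Qed.


Lemma head_genF c N r z :
  z \in flatten [seq [seq build c d fs | fs <- genF N (r + d)] | d <- ds c N] ->
  exists ts rest, z = CNode c ts :: rest.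
Proof. by case/flatten_mapP => d _ /mapP [fs _ ->]; exists (take d fs), (drop d fs). Qed.

Lemma uniq_genF N r : uniq (genF N r).
Proof.
elim: N r => [|N IH] r; first by rewrite /=; case: (r == 0%N).
case: r => [|r] //=.
apply: uniq_flatten_map.
- exact: enum_uniq.
- move=> c _; apply: uniq_flatten_map.
  + by rewrite /ds; case: ifP => _; [exact: iota_uniq|].
  + move=> d dd; rewrite map_inj_in_uniq ?IH // => fs gs.
    rewrite !mem_genF => /and3P [/eqP s1 _ _] /and3P [/eqP s2 _ _] [e1 e2].
    by rewrite -(cat_take_drop d fs) e1 e2 cat_take_drop.
  + move=> d d' z dd dd' /mapP [fs fi ->] /mapP [gs gi] [et _].
    move: fi gi; rewrite !mem_genF => /and3P [/eqP s1 _ _] /and3P [/eqP s2 _ _].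
    have h1 : size (take d fs) = d by rewrite size_takel // s1 leq_addl.
    have h2 : size (take d' gs) = d' by rewrite size_takel // s2 leq_addl.
    by rewrite -h1 -h2 et.
- move=> c c' z _ _ /head_genF [ts [rest ->]] /head_genF [ts' [rest' [e _ _]]].
  exact: e.
Qed.

Lemma sum_iota_shift (G : nat -> nat) a N :
  \sum_(d <- iota a N) G d = \sum_(d < N) G (a + d)%N.
Proof.
elim: N a => [|N IH] a; first by rewrite big_nil big_ord0.
rewrite /= big_cons IH big_ord_recl addn0; congr (_ + _); apply: eq_bigr => i _. by rewrite lift0 addSn addnS.
Qed.

Lemma size_genF N r : size (genF N r) = Gn l (l + m) N r.
Proof.
elim: N r => [|N IH] r; first by case: r.
case: r => [|r] //=.
rewrite size_flatten_map.
rewrite (eq_bigr (fun c : 'I_K => if (c < l)%N then Gn l (l + m) N r + \sum_(d < N) Gn l (l + m) N (r + d.+1) else Gn l (l + m) N r)); last first.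
  move=> c _; rewrite size_flatten_map /ds; case: ifP => _.
    rewrite /= big_cons size_map IH addn0 sum_iota_shift; congr (_ + _).
    by apply: eq_bigr => d _; rewrite size_map IH add1n.
  by rewrite big_cons big_nil size_map IH addn0 addn0.
rewrite big_enum /= big_split_ord /=.
rewrite (eq_bigr (fun _ => Gn l (l + m) N r + \sum_(d < N) Gn l (l + m) N (r + d.+1))); last first.
  by move=> i _; rewrite /= ltn_ord.
rewrite [X in _ + X = _](eq_bigr (fun _ => Gn l (l + m) N r)); last first.
  by move=> i _; rewrite /= ltnNge leq_addr.
rewrite !big_const_ord !iter_addn_0.
set X := Gn _ _ _ _; set Y := \sum_(_ < _) _; nia.
Qed.

End Main.

Section Final.
Variables l m : nat.

Lemma genF1 n fs : fs \in genF l m n 1 ->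
  exists t, fs = [:: t] /\ valid (Smat l m) t /\ csize t = n.
Proof.
rewrite mem_genF /okF => /and3P [/eqP s1 va /eqP e].
case: fs s1 va e => [|t [|t' fs]] //= _ /andP [vt _] e.
by exists t; split; [|split] => //; rewrite -e addn0.
Qed.

Lemma flatten_singletons (T : Type) (s : list (list T)) :
  (forall x, List.In x s -> size x = 1%N) -> size (flatten s) = size s.
Proof.
elim: s => [|x s IH] //= h; rewrite size_cat h /=; last by left.
by rewrite IH // => y ys; apply: h; right.
Qed.

Lemma main_count n : exists c, tA_is (Smat l m) n c /\ c = Gn l (l + m) n 1.
Proof.
set L := flatten (genF l m n 1).
exists (length L); split; last first.
  rewrite length_size /L flatten_singletons ?size_genF // => x /In_mem /genF1 [t [-> _]] //.
exists L; split; [|split] => //.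
  apply: uniq_NoDup; rewrite /L -[genF l m n 1]map_id.
  apply: uniq_flatten_map; first exact: uniq_genF.
    by move=> x /genF1 [t [-> _]].
  move=> x y z /genF1 [t [-> _]] /genF1 [t' [-> _]].
  by rewrite !mem_seq1 => /eqP -> /eqP ->.
move=> x; rewrite In_mem; split.
  by case/flattenP => fs /genF1 [t [-> [vt ct]]]; rewrite mem_seq1 => /eqP ->.
case=> vx cx; apply/flattenP; exists [:: x]; last by rewrite mem_seq1.
by rewrite mem_genF /okF /= vx cx addn0 !eqxx.
Qed.
End Final.

Local Open Scope ring_scope.

Theorem theorem32 (l m : nat) (hl : (0 < l)%N) (hm : (0 < m)%N) (n : nat)
    (hn : (1 < n)%N) :
  exists c : nat, tA_is (Smat l m) n c /\
    c%:R = \sum_(1 <= k < n) narayana n.-1 k * (l%:R ^+ (n - k) * (l + m)%:R ^+ k) :> rat.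
Proof.
case: (main_count l m n) => c [hc ec]; exists c; split => //.
by rewrite ec Gn_cf Gcf_nara.
Qed.
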